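(* Let $\rho$ be a density operator on $\mathcal H_A\otimes\mathcal H_B$ ($\dim\mathcal H_A=\dim\mathcal H_B=2$) and let $\mu$ be an ansatz. Then $\mathscr M_A'\subseteq\operatorname{box}(\mu)$ if and only if $\mathscr S_A'\subseteq\operatorname{box}(\mu)$.
   Context: $\sigma_0=\mathbb I,\sigma_1,\sigma_2,\sigma_3$ are the identity and Pauli matrices; $\mathbf r\cdot\sigma=\sum_{k=1}^3r_k\sigma_k$. Alice's EPR map is $\rho^{A\to B}(A)=\operatorname{Tr}_A[\rho(A\otimes\mathbb I^B)]$ for Hermitian $A$ on $\mathcal H_A$; $X'$ denotes the image of a set $X$ under this map. $\mathscr M_A=\{M \text{ Hermitian on }\mathcal H_A: O\le M\le\mathbb I^A\}$ and $\mathscr S_A=\{M\in\mathscr M_A:\operatorname{Tr}M=1\}=\{\tfrac12(\mathbb I^A+\mathbf r\cdot\sigma^A):|\mathbf r|\le1\}$. An ansatz is a Borel probability measure $\mu$ on the unit sphere $S^2\subset\mathbb R^3$ with $\int\tfrac12(\mathbb I^B+\mathbf n\cdot\sigma^B)\,d\mu(\mathbf n)=\operatorname{Tr}_A\rho$, and $\operatorname{box}(\mu)=\{\int\beta(\mathbf n)\tfrac12(\mathbb I^B+\mathbf n\cdot\sigma^B)\,d\mu(\mathbf n):\beta:S^2\to[0,1]\text{ Borel}\}$. *)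

(* Defs.v *)
From HB Require Import structures.
From mathcomp Require Import all_boot all_order all_algebra complex.
From mathcomp Require Import all_classical all_reals all_analysis.
Set Implicit Arguments. Unset Strict Implicit. Unset Printing Implicit Defensive.
Import Order.TTheory GRing.Theory Num.Theory.
Local Open Scope ring_scope.
Local Open Scope classical_set_scope.

Section Defs.
Variable R : realType.
Local Notation C := R[i].

Definition adj {m n} (M : 'M[C]_(m, n)) : 'M[C]_(n, m) :=
  \matrix_(i, j) (M j i)^*.

Definition hermitian {n} (M : 'M[C]_n) : Prop := adj M = M.

Definition psd {n} (M : 'M[C]_n) : Prop :=
  hermitian M /\ forall v : 'cV[C]_n, 0 <= (adj v *m M *m v) 0 0.

Definition loewner_le {n} (M N : 'M[C]_n) : Prop := psd (N - M).

Definition density (rho : 'M[C]_4) : Prop := psd rho /\ \tr rho = 1.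

(* basis index of |a> (x) |b> in C^2 (x) C^2 = C^4 *)
Definition tidx (a b : 'I_2) : 'I_4 := inord (2 * a + b).

(* A (x) I^B *)
Definition tens_I (A : 'M[C]_2) : 'M[C]_4 :=
  \matrix_(i, j) \sum_(a < 2) \sum_(b < 2) \sum_(a' < 2) \sum_(b' < 2)
     (if (i == tidx a b) && (j == tidx a' b') then A a a' * (b == b')%:R else 0).

Definition ptrA (X : 'M[C]_4) : 'M[C]_2 :=
  \matrix_(b, b') \sum_(a < 2) X (tidx a b) (tidx a b').

Definition EPR (rho : 'M[C]_4) (A : 'M[C]_2) : 'M[C]_2 := ptrA (rho *m tens_I A).

Definition sigma1 : 'M[C]_2 := \matrix_(i, j) (if i != j then 1 else 0).
Definition sigma2 : 'M[C]_2 :=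
  \matrix_(i, j) (if (i == 0) && (j == 1) then - 'i
                  else if (i == 1) && (j == 0) then 'i else 0).
Definition sigma3 : 'M[C]_2 :=
  \matrix_(i, j) (if i == j then (if i == 0 then 1 else -1) else 0).

Definition R3 := ((R * R) * R)%type.
Definition S2 : set R3 := [set n | n.1.1 ^+ 2 + n.1.2 ^+ 2 + n.2 ^+ 2 = 1].

Definition rsigma (r : R3) : 'M[C]_2 :=
  (r.1.1)%:C%C *: sigma1 + (r.1.2)%:C%C *: sigma2 + (r.2)%:C%C *: sigma3.

Definition qstate (r : R3) : 'M[C]_2 := (2%:R)^-1 *: (1%:M + rsigma r).

Definition M_A : set 'M[C]_2 := [set M | loewner_le 0 M /\ loewner_le M 1%:M].
Definition S_A : set 'M[C]_2 := [set M | M_A M /\ \tr M = 1].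

Definition mxint (mu : {measure set R3 -> \bar R}) (f : R3 -> 'M[C]_2) : 'M[C]_2 :=
  \matrix_(i, j)
    ((fine (\int[mu]_(n in S2) (complex.Re (f n i j))%:E))
      +i* (fine (\int[mu]_(n in S2) (complex.Im (f n i j))%:E)))%C.

Definition ansatz (rho : 'M[C]_4) (mu : probability R3 R) : Prop :=
  mu S2 = 1%E /\ mxint mu qstate = ptrA rho.

Definition box (mu : probability R3 R) : set 'M[C]_2 :=
  [set X | exists beta : R3 -> R,
     [/\ measurable_fun S2 beta,
         (forall n, S2 n -> 0 <= beta n <= 1) &
         X = mxint mu (fun n => (beta n)%:C%C *: qstate n)]].

End Defs.

(* Main.v *)
Require Import Defs.
From HB Require Import structures.
From mathcomp Require Import all_boot all_order all_algebra complex.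
From mathcomp Require Import all_classical all_reals all_analysis.
From mathcomp Require Import ring lra.
Set Implicit Arguments. Unset Strict Implicit. Unset Printing Implicit Defensive.
Import Order.TTheory GRing.Theory Num.Theory.
Local Open Scope ring_scope.
Local Open Scope classical_set_scope.

Lemma ord2 (i : 'I_2) : i = 0 \/ i = 1.
Proof. by case: i => [[|[|n]] Hi] //; [left|right]; apply: val_inj. Qed.
Lemma tidx_val (a b : 'I_2) : nat_of_ord (tidx a b) = (2 * a + b)%N.
Proof. rewrite /tidx inordK //; case: (ord2 a) => ->; case: (ord2 b) => ->. all: by []. Qed.
Lemma tidx_eq (a b a' b' : 'I_2) : (tidx a b == tidx a' b') = (a == a') && (b == b').
Proof.
rewrite -val_eqE /= !tidx_val.
by case: (ord2 a) => ->; case: (ord2 b) => ->; case: (ord2 a') => ->; case: (ord2 b') => ->.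
Qed.
Lemma ord4 (i : 'I_4) : [\/ i = tidx 0 0, i = tidx 0 1, i = tidx 1 0 | i = tidx 1 1].
Proof.
case: i => [[|[|[|[|n]]]] Hi] //; [apply: Or41|apply: Or42|apply: Or43|apply: Or44]; apply: val_inj; rewrite /= tidx_val; by [].
Qed.

Section S.
Variable R : realType.
Local Notation C := R[i].

Lemma cD (a b : C) : (a + b)^* = a^* + b^*.
Proof. exact: rmorphD. Qed.
Lemma cB (a b : C) : (a - b)^* = a^* - b^*.
Proof. exact: rmorphB. Qed.
Lemma cN (a : C) : (- a)^* = - a^*.
Proof. exact: rmorphN. Qed.
Lemma cM (a b : C) : (a * b)^* = a^* * b^*.
Proof. exact: rmorphM. Qed.
Lemma cR (r : R) : ((r%:C)%C)^* = (r%:C)%C.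
Proof. exact: conjc_real. Qed.
Lemma c0 : (0:C)^* = 0. Proof. exact: conjC0. Qed.
Lemma c1 : (1:C)^* = 1. Proof. exact: conjC1. Qed.
Lemma cK (a : C) : (a^*)^* = a. Proof. exact: conjCK. Qed.
Lemma ci : ('i%C : C)^* = - 'i%C. Proof. by apply/eqP; rewrite eq_complex /= oppr0 !eqxx. Qed.
Lemma cE (a : C) : a^* = conjc a. Proof. by []. Qed.

Lemma sum2 (V : nmodType) (F : 'I_2 -> V) : \sum_(i < 2) F i = F 0 + F 1.
Proof. by rewrite big_ord_recl big_ord_recl big_ord0 addr0; congr (F _ + F _); apply/val_inj. Qed.

Definition qf (M : 'M[C]_2) (x y : C) : C :=
  x^* * M 0 0 * x + x^* * M 0 1 * y + y^* * M 1 0 * x + y^* * M 1 1 * y.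

Lemma qfE (M : 'M[C]_2) (v : 'cV[C]_2) :
  (adj v *m M *m v) 0 0 = qf M (v 0 0) (v 1 0).
Proof.
rewrite /qf !mxE !sum2 !mxE !sum2 !mxE /=. ring.
Qed.

Definition vec2 (x y : C) : 'cV[C]_2 := \col_i (if i == 0 then x else y).


Lemma psd_qf (M : 'M[C]_2) : psd M -> forall x y, 0 <= qf M x y.
Proof. by move=> [_ H] x y; have := H (vec2 x y); rewrite qfE !mxE. Qed.

Lemma hermE (M : 'M[C]_2) : Defs.hermitian M -> forall i j, (M j i)^* = M i j.
Proof. by move=> H i j; have := congr1 (fun X : 'M[C]_2 => X i j) (H : adj M = M); rewrite /= mxE. Qed.

Lemma psd_adjug (M : 'M[C]_2) : psd M -> psd ((\tr M)%:M - M).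
Proof.
move=> [hM pM]; have hE := hermE hM; split.
  apply/matrixP => i j; rewrite !mxE /mxtrace sum2.
  case: (ord2 i) => ->; case: (ord2 j) => -> /=;
  rewrite /= ?mulr1n ?mulr0n ?cB ?cD ?hE ?c0 //.
move=> v; rewrite qfE.
have := psd_qf (Logic.conj hM pM) ((v 1 0)^*) (- (v 0 0)^*).
congr (_ <= _); rewrite /qf !mxE /mxtrace sum2 /= cN !cK; ring.
Qed.

Lemma qf10 (X : 'M[C]_2) : qf X 1 0 = X 0 0.
Proof. rewrite /qf c1 c0; ring. Qed.
Lemma qf01 (X : 'M[C]_2) : qf X 0 1 = X 1 1.
Proof. rewrite /qf c1 c0; ring. Qed.

Lemma psd_scale (M : 'M[C]_2) (c : R) : psd M -> 0 <= c -> psd ((c%:C)%C *: M).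
Proof.
move=> [hM pM] c0; have hE := hermE hM; split.
  by apply/matrixP => i j; rewrite !mxE cM cR hE.
move=> v; rewrite qfE.
have -> : qf ((c%:C)%C *: M) (v 0 0) (v 1 0) = (c%:C)%C * qf M (v 0 0) (v 1 0).
  by rewrite /qf !mxE; ring.
by apply: mulr_ge0; [rewrite ler0c | exact: psd_qf].
Qed.

Lemma ge0_real (z : C) : 0 <= z -> z = ((complex.Re z)%:C)%C.
Proof. by case: z => a b; rewrite lecE /= => /andP[/eqP -> _]. Qed.

Lemma psd_tr0 (M : 'M[C]_2) : psd M -> \tr M = 0 -> M = 0.
Proof.
move=> pM t0; have pN := psd_adjug pM; rewrite t0 in pN.
have qz x y : qf M x y = 0.
  apply/eqP; rewrite eq_le psd_qf // andbT -oppr_ge0.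
  have := psd_qf pN x y; congr (_ <= _); rewrite /qf !mxE /= ?mulr1n ?mulr0n; ring.
have e00 := qz 1 0; rewrite qf10 in e00.
have e11 := qz 0 1; rewrite qf01 in e11.
have e1 := qz 1 1; have e2 := qz 1 'i%C.
rewrite /qf c1 ci e00 e11 in e1 e2.
have h1 : M 0 1 + M 1 0 = 0 by rewrite -e1; ring.
have h2 : 'i%C * (M 0 1 - M 1 0) = 0 by rewrite -e2; ring.
have inz : ('i%C : C) != 0.
  by apply/eqP => /(congr1 (@complex.Im R)) /= /eqP; rewrite oner_eq0.
move: h2 => /eqP; rewrite mulf_eq0 (negbTE inz) /= => /eqP h2.
have a0 : M 0 1 = 0.
  have : M 0 1 *+ 2 = 0.
    rewrite mulr2n; have -> : M 0 1 + M 0 1 = (M 0 1 + M 1 0) + (M 0 1 - M 1 0) by ring.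
    by rewrite h1 h2 addr0.
  by move/eqP; rewrite mulrn_eq0 /= => /eqP.
have b0 : M 1 0 = 0 by move: h1; rewrite a0 add0r.
apply/matrixP => i j; rewrite mxE.
by case: (ord2 i) => ->; case: (ord2 j) => ->.
Qed.

Lemma oneBc (a : R) : (1 - (a%:C)%C : C) = ((1 - a)%:C)%C.
Proof. by rewrite rmorphB rmorph1. Qed.

Lemma MA_psd (M : 'M[C]_2) : M_A M -> psd M /\ psd (1%:M - M).
Proof. by case => p0 p1; split => //; move: p0; rewrite /loewner_le subr0. Qed.

Lemma MA_tr (M : 'M[C]_2) : M_A M -> exists t : R, \tr M = (t%:C)%C /\ 0 <= t <= 2.
Proof.
move=> /MA_psd [p0 p1].
have h0 := psd_qf p0 1 0; rewrite qf10 in h0.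
have h1 := psd_qf p0 0 1; rewrite qf01 in h1.
have g0 := psd_qf p1 1 0; rewrite qf10 !mxE /= mulr1n in g0.
have g1 := psd_qf p1 0 1; rewrite qf01 !mxE /= mulr1n in g1.
set a := complex.Re (M 0 0) in h0 g0.
set d := complex.Re (M 1 1) in h1 g1.
have ha : M 0 0 = (a%:C)%C := ge0_real h0.
have hd : M 1 1 = (d%:C)%C := ge0_real h1.
rewrite ha ler0c in h0; rewrite hd ler0c in h1.
rewrite ha oneBc ler0c in g0; rewrite hd oneBc ler0c in g1.
exists (a + d); split; last by apply/andP; split; lra.
by rewrite /mxtrace sum2 ha hd rmorphD.
Qed.

Lemma MA_scale (M : 'M[C]_2) (t : R) : M_A M -> \tr M = (t%:C)%C -> 0 < t ->
  S_A ((t^-1%:C)%C *: M).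
Proof.
move=> hM ht t0; have [p0 p1] := MA_psd hM.
have tV : ((t^-1%:C)%C * (t%:C)%C : C) = 1 by rewrite -rmorphM mulVf ?gt_eqF.
split; last by rewrite mxtraceZ ht tV.
split.
  by rewrite /loewner_le subr0; apply: psd_scale => //; rewrite invr_ge0 ltW.
rewrite /loewner_le.
have -> : 1%:M - (t^-1%:C)%C *: M = (t^-1%:C)%C *: ((\tr M)%:M - M).
  by rewrite scalerBr scale_scalar_mx ht tV.
by apply: psd_scale; [exact: psd_adjug | rewrite invr_ge0 ltW].
Qed.

Lemma MA_compl (M : 'M[C]_2) : M_A M -> M_A (1%:M - M).
Proof.
move=> /MA_psd [p0 p1]; split; rewrite /loewner_le ?subr0 //.
by rewrite opprB addrC subrK.
Qed.

Lemma SA_MA (M : 'M[C]_2) : S_A M -> M_A M.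
Proof. by case. Qed.

Lemma tens_I1 : tens_I (1%:M : 'M[C]_2) = 1%:M.
Proof.
apply/matrixP=> i j; rewrite !mxE.
by case: (ord4 i) => ->; case: (ord4 j) => ->; rewrite !sum2 !tidx_eq /= !mxE /=;
rewrite ?(mulr1n, mulr0n, mul1r, mulr1, mulr0, mul0r, addr0, add0r).
Qed.

Lemma tens_IZ (c : C) (A : 'M[C]_2) : tens_I (c *: A) = c *: tens_I A.
Proof.
apply/matrixP=> i j; rewrite !mxE big_distrr; apply: eq_bigr => a _.
rewrite big_distrr; apply: eq_bigr => b _; rewrite big_distrr; apply: eq_bigr => a' _.
rewrite big_distrr; apply: eq_bigr => b' _.
by case: ifP => _; rewrite /= ?mxE ?mulr0 // mulrA.
Qed.

Lemma tens_IB (A B : 'M[C]_2) : tens_I (A - B) = tens_I A - tens_I B.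
Proof.
apply/matrixP=> i j; rewrite !mxE -sumrB; apply: eq_bigr => a _.
rewrite -sumrB; apply: eq_bigr => b _; rewrite -sumrB; apply: eq_bigr => a' _.
rewrite -sumrB; apply: eq_bigr => b' _.
by case: ifP => _; rewrite ?mxE ?subr0 // mulrBl.
Qed.

Lemma ptrAZ (c : C) (X : 'M[C]_4) : ptrA (c *: X) = c *: ptrA X.
Proof.
apply/matrixP=> i j; rewrite !mxE big_distrr; apply: eq_bigr => a _.
by rewrite mxE.
Qed.

Lemma ptrAB (X Y : 'M[C]_4) : ptrA (X - Y) = ptrA X - ptrA Y.
Proof.
apply/matrixP=> i j; rewrite !mxE -sumrB; apply: eq_bigr => a _.
by rewrite !mxE.
Qed.

Lemma EPRZ (rho : 'M[C]_4) c A : EPR rho (c *: A) = c *: EPR rho A.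
Proof. by rewrite /EPR tens_IZ -scalemxAr ptrAZ. Qed.

Lemma EPRB (rho : 'M[C]_4) A B : EPR rho (A - B) = EPR rho A - EPR rho B.
Proof. by rewrite /EPR tens_IB mulmxBr ptrAB. Qed.

Lemma EPR1 (rho : 'M[C]_4) : EPR rho 1%:M = ptrA rho.
Proof. by rewrite /EPR tens_I1 mulmx1. Qed.
Local Notation T := (R3 R).
Local Notation SS := (@S2 R).

Lemma mx1 : measurable_fun setT (fun n : T => n.1.1).
Proof. exact: (measurableT_comp measurable_fst measurable_fst). Qed.
Lemma mx2 : measurable_fun setT (fun n : T => n.1.2).
Proof. exact: (measurableT_comp measurable_snd measurable_fst). Qed.
Lemma mx3 : measurable_fun setT (fun n : T => n.2).
Proof. exact: measurable_snd. Qed.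

Lemma mS2 : measurable (@S2 R).
Proof.
have mg : measurable_fun setT (fun n : T => n.1.1 ^+ 2 + n.1.2 ^+ 2 + n.2 ^+ 2).
  apply: measurable_realfun.measurable_funD; [apply: measurable_realfun.measurable_funD|]; apply: measurable_realfun.measurable_funX;
  [exact: mx1|exact: mx2|exact: mx3].
have := mg measurableT [set 1] (measurable_set1 1); rewrite setTI.
by [].
Qed.

Lemma S2_bound (n : T) : S2 n -> [/\ `|n.1.1| <= 1, `|n.1.2| <= 1 & `|n.2| <= 1].
Proof.
rewrite /S2 /= => h; split; rewrite -ler_sqr ?nnegrE // expr1n real_normK ?num_real //; nra.
Qed.


Lemma lin_int (mu : probability T R) (beta : T -> R) (c0 c1 c2 c3 : R) :
  measurable_fun SS beta -> (forall n, SS n -> 0 <= beta n <= 1) ->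
  `|c0| <= 1 -> `|c1| <= 1 -> `|c2| <= 1 -> `|c3| <= 1 ->
  mu.-integrable SS (fun n => (beta n * (2^-1 * (c0 + c1 * n.1.1 + c2 * n.1.2 + c3 * n.2)))%:E).
Proof.
move=> mb hb h0 h1 h2 h3.
apply: (measurable_bounded_integrable (f := fun n => beta n * (2^-1 * (c0 + c1 * n.1.1 + c2 * n.1.2 + c3 * n.2)))).
- exact: mS2.
- by apply: (le_lt_trans (probability_le1 _ mS2)); rewrite ltry.
- apply: measurable_realfun.measurable_funM => //; apply: measurable_funTS.
  apply: measurable_realfun.measurable_funM; first exact: measurable_cst.
  apply: measurable_realfun.measurable_funD; [apply: measurable_realfun.measurable_funD; [apply: measurable_realfun.measurable_funD|]|].
  + exact: measurable_cst.
  + apply: measurable_realfun.measurable_funM; [exact: measurable_cst|exact: mx1].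
  + apply: measurable_realfun.measurable_funM; [exact: measurable_cst|exact: mx2].
  + apply: measurable_realfun.measurable_funM; [exact: measurable_cst|exact: mx3].
- exists 4; split; first exact: num_real.
  move=> M hM n /= Sn.
  have [b1 b2 b3] := S2_bound Sn; have /andP[hb0 hb1] := hb n Sn.
  move: h0 h1 h2 h3 b1 b2 b3; rewrite !ler_norml => /andP[? ?] /andP[? ?] /andP[? ?] /andP[? ?] /andP[? ?] /andP[? ?] /andP[? ?].
  have pm (a b : R) : -1 <= a -> a <= 1 -> -1 <= b -> b <= 1 -> -1 <= a * b <= 1.
    by move=> *; apply/andP; split; nra.
  have /andP[? ?] := pm c1 n.1.1 ltac:(done) ltac:(done) ltac:(done) ltac:(done).
  have /andP[? ?] := pm c2 n.1.2 ltac:(done) ltac:(done) ltac:(done) ltac:(done).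
  have /andP[? ?] := pm c3 n.2 ltac:(done) ltac:(done) ltac:(done) ltac:(done).
  set s := c0 + _ + _ + _.
  have s1 : -4 <= s by rewrite /s; lra.
  have s2 : s <= 4 by rewrite /s; lra.
  apply/andP; split; nra.
Qed.
Lemma re_lin (b x y z : R) (d s1 s2 s3 : C) :
  complex.Re ((b%:C)%C * ((2%:R)^-1 * (d + ((x%:C)%C * s1 + (y%:C)%C * s2 + (z%:C)%C * s3))))
  = b * (2^-1 * (complex.Re d + complex.Re s1 * x + complex.Re s2 * y + complex.Re s3 * z)).
Proof. case: d => ? ?; case: s1 => ? ?; case: s2 => ? ?; case: s3 => ? ?; simpc; rewrite /=; by field. Qed.
Lemma im_lin (b x y z : R) (d s1 s2 s3 : C) :
  complex.Im ((b%:C)%C * ((2%:R)^-1 * (d + ((x%:C)%C * s1 + (y%:C)%C * s2 + (z%:C)%C * s3))))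
  = b * (2^-1 * (complex.Im d + complex.Im s1 * x + complex.Im s2 * y + complex.Im s3 * z)).
Proof. case: d => ? ?; case: s1 => ? ?; case: s2 => ? ?; case: s3 => ? ?; simpc; rewrite /=; by field. Qed.
Lemma qE (b : R) (n : R3 R) i j : (((b%:C)%C *: qstate n) i j) =
   (b%:C)%C * ((2%:R)^-1 * ((1%:M : 'M[C]_2) i j + (((n.1.1)%:C)%C * @sigma1 R i j + ((n.1.2)%:C)%C * @sigma2 R i j + ((n.2)%:C)%C * @sigma3 R i j))).
Proof. by rewrite !mxE. Qed.
Lemma bds (i j : 'I_2) : [/\ `|complex.Re ((1%:M : 'M[C]_2) i j)| <= 1, `|complex.Re (@sigma1 R i j)| <= 1,
  `|complex.Re (@sigma2 R i j)| <= 1 & `|complex.Re (@sigma3 R i j)| <= 1].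
Proof.
case: (ord2 i) => ->; case: (ord2 j) => ->; by rewrite !mxE /= ?oppr0 ?normrN ?normr0 ?normr1 ?ler01.
Qed.
Lemma bdsI (i j : 'I_2) : [/\ `|complex.Im ((1%:M : 'M[C]_2) i j)| <= 1, `|complex.Im (@sigma1 R i j)| <= 1,
  `|complex.Im (@sigma2 R i j)| <= 1 & `|complex.Im (@sigma3 R i j)| <= 1].
Proof.
case: (ord2 i) => ->; case: (ord2 j) => ->; by rewrite !mxE /= ?oppr0 ?normrN ?normr0 ?normr1 ?ler01.
Qed.

End S.

Section S.
Variable R : realType.
Local Notation C := R[i].
Local Notation T := (R3 R).
Local Notation SS := (@S2 R).
Lemma ReM_real (x : R) (z : C) : complex.Re ((x%:C)%C * z) = x * complex.Re z.
Proof. by case: z => a b /=; ring. Qed.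
Lemma ReB (a b : C) : complex.Re (a - b) = complex.Re a - complex.Re b.
Proof. by case: a => ? ?; case: b => ? ?. Qed.
Lemma ImB (a b : C) : complex.Im (a - b) = complex.Im a - complex.Im b.
Proof. by case: a => ? ?; case: b => ? ?. Qed.
Lemma ImM_real (x : R) (z : C) : complex.Im ((x%:C)%C * z) = x * complex.Im z.
Proof. by case: z => a b /=; ring. Qed.
Lemma scaleC (r a b : R) : (r%:C)%C * (a +i* b)%C = ((r * a) +i* (r * b))%C.
Proof. by simpc. Qed.
Lemma subC (a b c d : R) : (a +i* b)%C - (c +i* d)%C = ((a - c) +i* (b - d))%C.
Proof. by []. Qed.
Lemma oneC : ((1 : R)%:C)%C = (1 : C). Proof. by []. Qed.

Lemma entry_int (mu : probability T R) (beta : T -> R) (i j : 'I_2) :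
  measurable_fun SS beta -> (forall n, SS n -> 0 <= beta n <= 1) ->
  mu.-integrable SS (fun n => (complex.Re ((((beta n)%:C)%C *: qstate n) i j))%:E) /\
  mu.-integrable SS (fun n => (complex.Im ((((beta n)%:C)%C *: qstate n) i j))%:E).
Proof.
move=> mb hb; have [b0 b1 b2 b3] := bds R i j; have [d0 d1 d2 d3] := bdsI R i j.
split.
- have -> : (fun n => (complex.Re ((((beta n)%:C)%C *: qstate n) i j))%:E) =
    (fun n => (beta n * (2^-1 * (complex.Re ((1%:M : 'M[C]_2) i j) + complex.Re (@sigma1 R i j) * n.1.1
        + complex.Re (@sigma2 R i j) * n.1.2 + complex.Re (@sigma3 R i j) * n.2)))%:E).
    Timeout 20 (by apply/funext => n; rewrite qE re_lin).
  Timeout 20 exact: lin_int.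
- have -> : (fun n => (complex.Im ((((beta n)%:C)%C *: qstate n) i j))%:E) =
    (fun n => (beta n * (2^-1 * (complex.Im ((1%:M : 'M[C]_2) i j) + complex.Im (@sigma1 R i j) * n.1.1
        + complex.Im (@sigma2 R i j) * n.1.2 + complex.Im (@sigma3 R i j) * n.2)))%:E).
    Timeout 20 (by apply/funext => n; rewrite qE im_lin).
  Timeout 20 exact: lin_int.
Qed.

End S.

Section S.
Variable R : realType.
Local Notation C := R[i].
Local Notation T := (R3 R).
Local Notation SS := (@S2 R).
Lemma mxintE (mu : probability T R) (f : T -> 'M[C]_2) i j :
  mxint mu f i j = ((fine (\int[mu]_(n in SS) (complex.Re (f n i j))%:E))
      +i* (fine (\int[mu]_(n in SS) (complex.Im (f n i j))%:E)))%C.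
Proof. by rewrite /mxint mxE. Qed.

Lemma cRM (a b : R) : (((a * b)%:C)%C : C) = (a%:C)%C * (b%:C)%C.
Proof. by simpc. Qed.
Lemma cRB (b : R) : (((1 - b)%:C)%C : C) = 1 - (b%:C)%C.
Proof. by simpc. Qed.

Lemma box_scale (mu : probability T R) X (r : R) : box mu X -> 0 <= r <= 1 ->
  box mu ((r%:C)%C *: X).
Proof.
move=> [beta [mb hb ->]] /andP[r0 r1].
exists (fun n => r * beta n); split.
- by apply: measurable_realfun.measurable_funM => //; exact: measurable_cst.
- by move=> n Sn; have /andP[? ?] := hb n Sn; apply/andP; split; nra.
apply/matrixP => i j; rewrite mxE.
rewrite [RHS](mxintE mu (fun n => ((r * beta n)%:C)%C *: qstate n) i j).
rewrite [X in _ * X = _](mxintE mu _ i j).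
have [iR iI] := entry_int mu i j mb hb.
have eR : (fun n => (complex.Re (((((r * beta n)%:C)%C) *: qstate n) i j))%:E) =
   (fun n => (r%:E * (complex.Re ((((beta n)%:C)%C *: qstate n) i j))%:E)%E).
  by apply/funext => n; rewrite !mxE cRM -mulrA ReM_real EFinM.
have eI : (fun n => (complex.Im (((((r * beta n)%:C)%C) *: qstate n) i j))%:E) =
   (fun n => (r%:E * (complex.Im ((((beta n)%:C)%C *: qstate n) i j))%:E)%E).
  by apply/funext => n; rewrite !mxE cRM -mulrA ImM_real EFinM.
rewrite eR eI (integralZl (@mS2 R) iR) (integralZl (@mS2 R) iI).
rewrite !fineM // ?(integrable_fin_num (@mS2 R) iR) ?(integrable_fin_num (@mS2 R) iI) //.
by rewrite scaleC.
Qed.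

Lemma box_compl (mu : probability T R) (rho : 'M[C]_4) X :
  mxint mu (@qstate R) = ptrA rho -> box mu X -> box mu (ptrA rho - X).
Proof.
move=> ans [beta [mb hb ->]].
have mc : measurable_fun SS (fun _ : T => (1 : R)) by exact: measurable_cst.
have hc : forall n, SS n -> 0 <= (fun _ : T => (1:R)) n <= 1 by move=> *; rewrite lexx ler01.
exists (fun n => 1 - beta n); split.
- by apply: measurable_realfun.measurable_funB => //; exact: measurable_cst.
- by move=> n Sn; have /andP[? ?] := hb n Sn; apply/andP; split; lra.
rewrite -ans; apply/matrixP => i j; rewrite mxE.
rewrite [RHS](mxintE mu (fun n => ((1 - beta n)%:C)%C *: qstate n) i j).
rewrite [X in _ + X = _]mxE [X in X - _ = _](mxintE mu _ i j) [X in _ - X = _](mxintE mu _ i j).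
have [iR iI] := entry_int mu i j mb hb.
have [qR qI] := entry_int mu i j mc hc.
have q1 : forall n, ((((fun _ : T => (1:R)) n)%:C)%C *: qstate n) i j = qstate n i j.
  by move=> n; rewrite mxE oneC mul1r.
have qR' : mu.-integrable SS (EFin \o (fun n => complex.Re (qstate n i j))).
  have -> : (EFin \o (fun n => complex.Re (qstate n i j))) =
    (fun n => (complex.Re ((((1:R)%:C)%C *: qstate n) i j))%:E).
    by apply/funext => n; rewrite /= q1.
  exact: qR.
have qI' : mu.-integrable SS (EFin \o (fun n => complex.Im (qstate n i j))).
  have -> : (EFin \o (fun n => complex.Im (qstate n i j))) =
    (fun n => (complex.Im ((((1:R)%:C)%C *: qstate n) i j))%:E).
    by apply/funext => n; rewrite /= q1.
  exact: qI.
have eR : (fun n => (complex.Re (((((1 - beta n)%:C)%C) *: qstate n) i j))%:E) =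
   (fun n => ((complex.Re (qstate n i j))%:E - (complex.Re ((((beta n)%:C)%C *: qstate n) i j))%:E)%E).
  by apply/funext => n; rewrite !mxE cRB mulrBl mul1r ReB EFinB.
have eI : (fun n => (complex.Im (((((1 - beta n)%:C)%C) *: qstate n) i j))%:E) =
   (fun n => ((complex.Im (qstate n i j))%:E - (complex.Im ((((beta n)%:C)%C *: qstate n) i j))%:E)%E).
  by apply/funext => n; rewrite !mxE cRB mulrBl mul1r ImB EFinB.
have IR : (\int[mu]_(n in SS) (complex.Re ((((1 - beta n)%:C)%C *: qstate n) i j))%:E =
  \int[mu]_(n in SS) (complex.Re (qstate n i j))%:E - \int[mu]_(n in SS) (complex.Re ((((beta n)%:C)%C *: qstate n) i j))%:E)%E.
  rewrite eR; exact: (integralB_EFin (@mS2 R) qR' iR).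
have II : (\int[mu]_(n in SS) (complex.Im ((((1 - beta n)%:C)%C *: qstate n) i j))%:E =
  \int[mu]_(n in SS) (complex.Im (qstate n i j))%:E - \int[mu]_(n in SS) (complex.Im ((((beta n)%:C)%C *: qstate n) i j))%:E)%E.
  rewrite eI; exact: (integralB_EFin (@mS2 R) qI' iI).
rewrite [in RHS]IR [in RHS]II.
rewrite [in RHS](fineB (integrable_fin_num (@mS2 R) qR') (integrable_fin_num (@mS2 R) iR)).
rewrite [in RHS](fineB (integrable_fin_num (@mS2 R) qI') (integrable_fin_num (@mS2 R) iI)).
by rewrite subC.
Qed.
End S.

Theorem lemma1 (R : realType) (rho : 'M[R[i]]_4) (mu : probability (R3 R) R) :
  density rho -> ansatz rho mu ->
  ((EPR rho @` @M_A R) `<=` box mu <-> (EPR rho @` @S_A R) `<=` box mu).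
Proof.
move=> _ [_ ans]; split.
  by move=> H X [M SM <-]; apply: H; exists M => //; exact: SA_MA.
move=> H X [M MM <-].
have box1 : box mu (ptrA rho).
  exists (fun _ => 1); split.
  - exact: measurable_cst.
  - by move=> *; rewrite lexx ler01.
  rewrite -ans; congr mxint; apply/funext => n; by rewrite oneC scale1r.
have small : forall N, M_A N -> forall t : R, \tr N = (t%:C)%C -> 0 <= t <= 1 ->
    box mu (EPR rho N).
  move=> N MN t ht /andP[t0 t1].
  have [t00|tn0] := eqVneq t 0.
    have N0 : N = 0.
      by apply: psd_tr0 (MA_psd MN).1 _; rewrite ht t00.
    rewrite N0 (_ : (0 : 'M[R[i]]_2) = (((0:R)%:C)%C) *: 1%:M); last by rewrite scale0r.
    rewrite EPRZ EPR1; apply: box_scale => //; by rewrite lexx ler01.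
  have tp : 0 < t by rewrite lt_neqAle eq_sym tn0.
  have SN := MA_scale MN ht tp.
  have hb : box mu (EPR rho ((t^-1%:C)%C *: N)) by apply: H; exists ((t^-1%:C)%C *: N).
  have -> : N = (t%:C)%C *: ((t^-1%:C)%C *: N).
    by rewrite scalerA -cRM mulfV // oneC scale1r.
  by rewrite EPRZ; apply: box_scale => //; apply/andP.
have [t [ht /andP[t0 t2]]] := MA_tr MM.
have [t1|t1] := leP t 1.
  by apply: (small M MM t ht); apply/andP.
have MC := MA_compl MM.
have trC : \tr (1%:M - M) = (((2 - t)%:C)%C : R[i]).
  by rewrite raddfB /= mxtrace1 ht; simpc.
have := small _ MC (2 - t) trC; rewrite EPRB EPR1 => hb.
have -> : EPR rho M = ptrA rho - (ptrA rho - EPR rho M) by rewrite opprB addrC subrK.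
by apply: box_compl => //; apply: hb; apply/andP; split; lra.
Qed.
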